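(* (a) Let $p=\prod_{i\in I}\Phi_{m_i}$ be a product of cyclotomic polynomials. Then $p(1)\equiv1\pmod2$ if and only if all $m_i\in\mathbb Z_{\ge1}-\{2^k\mid k\in\mathbb Z_{\ge0}\}$. (b) Let $\Lambda$ be a $\mathbb Z$-lattice with an automorphism $M_h$ of finite order, and let $\Lambda^{(1)}\subset\Lambda$ be an $M_h$-invariant sublattice with $[\Lambda:\Lambda^{(1)}]=2$. Write the characteristic polynomial $p_\Lambda=p_1p_2$ with $p_j=\prod_{m\in J_j}\Phi_m$, where $J_1\subset\mathbb Z_{\ge1}-\{2^k\mid k\in\mathbb Z_{\ge0}\}$ and $J_2\subset\{2^k\mid k\in\mathbb Z_{\ge0}\}$. Then $J_2\ne\emptyset$, $p_2\ne1$, $\Lambda_p=\Lambda^{(1)}_p$ for every $p$ with $p\mid p_1$, and $[\Lambda_p:\Lambda^{(1)}_p]=2$ for every $p$ with $p_2\mid p$ (here $p$ ranges over products of cyclotomic polynomials dividing $p_\Lambda$).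
   Context: $\Phi_n$ is the $n$-th cyclotomic polynomial. For an $M_h$-invariant sublattice $B$ and a product $p$ of cyclotomic polynomials dividing the characteristic polynomial of $M_h$ on $B$, $B_p:=(\bigoplus_{\lambda:p(\lambda)=0}B_\lambda)\cap B$, with $B_\lambda=\ker(M_h-\lambda)\subset B\otimes\mathbb C$. *)

(* Defs.v *)
From mathcomp Require Import all_boot all_order all_algebra all_field.
Set Implicit Arguments. Unset Strict Implicit. Unset Printing Implicit Defensive.
Import Order.TTheory GRing.Theory Num.Theory.
Local Open Scope ring_scope.

Definition is_pow2 (m : nat) : Prop := exists k : nat, m = (2 ^ k)%N.

Definition cycl_prod (s : seq nat) : {poly int} := \prod_(m <- s) 'Phi_m.

(* Lattice Lambda = Z^n (row vectors), M_h acting by v |-> v *m M. *)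
Definition in_eigsum n (M : 'M[algC]_n) (p : {poly algC}) (x : 'rV[algC]_n) : Prop :=
  exists s : seq (algC * 'rV[algC]_n),
    (forall lv, lv \in s -> root p lv.1 /\ lv.2 *m M = lv.1 *: lv.2) /\
    x = \sum_(lv <- s) lv.2.

(* B_p := (direct sum of the B_lambda, p(lambda)=0) intersected with B *)
Definition Bpart n (M : 'M[int]_n) (B : 'rV[int]_n -> Prop) (p : {poly int})
  : 'rV[int]_n -> Prop :=
  fun x => B x /\ in_eigsum (map_mx intr M) (map_poly intr p) (map_mx intr x).

Definition inv_sublattice n (M : 'M[int]_n) (B : 'rV[int]_n -> Prop) : Prop :=
  [/\ B 0, (forall x y, B x -> B y -> B (x + y)), (forall x, B x -> B (- x))
    & (forall x, B x -> B (x *m M))].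

Definition index2 n (A B : 'rV[int]_n -> Prop) : Prop :=
  (forall x, B x -> A x) /\
  exists v, [/\ A v, ~ B v & forall x, A x -> B x \/ B (x - v)].

(* Main.v *)
Require Import Defs.
From mathcomp Require Import all_boot all_order all_algebra all_field.
Import Order.TTheory GRing.Theory Num.Theory.
Local Open Scope ring_scope.

Definition fC (d : nat) : int := ('Phi_d).[1].

Lemma Phi1 : 'Phi_1 = 'X - 1.
Proof. by have := prod_Cyclotomic (isT : (0 < 1)%N); rewrite big_seq1 expr1. Qed.

Lemma Dlem n : (0 < n)%N -> \prod_(d <- divisors n | d != 1%N) fC d = n%:Z.
Proof.
move=> n0; have := prod_Cyclotomic n0.
rewrite (bigD1_seq 1%N) ?divisors_uniq -?dvdn_divisors ?dvd1n //.
rewrite Phi1 subrX1 => /mulfI H.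
have {}H := H (negbT (polyXsubC_eq0 _)) ; rewrite ?polyC1 in H.
have := congr1 (fun p => p.[1]) H; rewrite /= horner_prod /fC => ->.
rewrite horner_sum (eq_bigr (fun _ => 1)); last by move=> i _; rewrite hornerXn expr1n.
by rewrite sumr_const card_ord natz.
Qed.

Lemma Dsplit n a : (0 < n)%N -> (0 < a)%N -> (a %| n)%N ->
  \prod_(d <- divisors n | d != 1%N) fC d =
  \prod_(d <- divisors a | d != 1%N) fC d *
  \prod_(d <- divisors n | (d != 1%N) && ~~ (d %| a)%N) fC d.
Proof.
move=> n0 a0 an; rewrite (bigID (fun d => (d %| a)%N)) /=; congr (_ * _).
rewrite (eq_bigl (fun d => (d %| a)%N && (d != 1%N))); last by move=> d; rewrite andbC.
rewrite -big_filter_cond; apply: perm_big; apply: uniq_perm.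
- by rewrite filter_uniq ?divisors_uniq.
- exact: divisors_uniq.
move=> d; rewrite mem_filter -!dvdn_divisors //.
by apply/andP/idP => [[]//|da]; split=> //; apply: dvdn_trans an.
Qed.

Lemma bigD1c (r : seq nat) (P : pred nat) j (F : nat -> int) :
  j \in r -> uniq r -> P j ->
  \prod_(i <- r | P i) F i = F j * \prod_(i <- r | P i && (i != j)) F i.
Proof.
move=> jr ur Pj; rewrite -big_filter (bigD1_seq j) ?mem_filter ?Pj ?filter_uniq //.
by rewrite big_filter_cond.
Qed.

Definition oddz (x : int) := ~~ (2 %| x)%Z.

Lemma oddzM x y : oddz (x * y) = oddz x && oddz y.
Proof. by rewrite /oddz !dvdzE abszM Euclid_dvdM // negb_or. Qed.

Lemma oddz_nat (r : nat) : oddz r%:Z = odd r.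
Proof. by rewrite /oddz dvdzE /= -coprime2n prime_coprime // negbK. Qed.

Lemma oddz_mod x : ((x %% 2)%Z = 1) <-> oddz x.
Proof.
rewrite /oddz; split.
  by move=> h; apply/negP => /dvdz_mod0P; rewrite h.
move=> /dvdz_mod0P h.
have h0 : 0 <= (x %% 2)%Z by apply: modz_ge0.
have h1 : ((x %% 2)%Z < 2) by apply: ltz_pmod.
move: h h0 h1; case: (x %% 2)%Z => [[|[|k]]|k] //.
Qed.

Lemma fC_odd m : (0 < m)%N -> oddz (fC m) <-> ~ is_pow2 m.
Proof.
move=> m0; have [r cr mE] := pfactor_coprime (isT : prime 2) m0.
set a := logn 2 m in mE.
have r0 : (0 < r)%N by move: m0; rewrite mE muln_gt0 => /andP[].
have [r1|rn1] := eqVneq r 1%N.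
  have pw : is_pow2 m by exists a; rewrite mE r1 mul1n.
  suff : ~~ oddz (fC m) by move/negP=> h; split=> [/h|/(_ pw)].
  rewrite mE r1 mul1n; clear; have ep k : (0 < 2 ^ k)%N by rewrite expn_gt0.
  case: a => [|b].
    by rewrite expn0 /fC Phi1 !hornerE subrr.
  have := Dlem _ (ep b.+1).
  rewrite (@Dsplit _ (2^b)) ?ep // ?dvdn_exp2l //.
  rewrite (Dlem _ (ep b)).
  rewrite (@bigD1c _ _ (2 ^ b.+1)%N) ?divisors_uniq -?dvdn_divisors ?ep //=.
rewrite big1_seq; last first.
    move=> d /andP[/andP[/andP[d1 dd] dn] dmem].
    move: dmem; rewrite -dvdn_divisors ?ep // => /dvdn_pfactor-/(_ isT) [k kb dE].
    move: kb; rewrite leq_eqVlt => /orP[/eqP kE|kb]; first by rewrite dE kE eqxx in dn.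
    by rewrite dE dvdn_Pexp2l // -ltnS kb in dd.
    have nz : (2 ^ b)%:Z != 0 by rewrite -natz pnatr_eq0 -lt0n ep.
    rewrite mulr1 => H; have -> : fC (2 ^ b.+1) = 2; last by [].
    by apply: (mulIf nz); rewrite mulrC H expnS PoszM.
  by rewrite dvdn_Pexp2l // ltnn andbT -(expn0 2) eqn_exp2l.
have ep k : (0 < 2 ^ k)%N by rewrite expn_gt0.
have np : ~ is_pow2 m.
  case=> k mk; have : (r %| 2 ^ k)%N by rewrite -mk mE dvdn_mulr.
  case/dvdn_pfactor => // j _ rj; case: j rj => [|j] rj; first by rewrite rj in rn1.
  by move: cr; rewrite rj coprime2n expnS oddM.
split=> // _.
have am : (2 ^ a %| m)%N by rewrite mE dvdn_mull.
have r2 : (1 < r)%N by rewrite ltn_neqAle eq_sym rn1 r0.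
have := Dlem _ m0; rewrite (@Dsplit _ (2 ^ a)) // (Dlem _ (ep a)).
rewrite (@bigD1c _ _ m) ?divisors_uniq -?dvdn_divisors //; last first.
  apply/andP; split.
    have mr : (r <= m)%N by rewrite mE leq_pmulr ?ep.
    by rewrite neq_ltn (leq_trans r2 mr) orbT.
  apply/negP => /(dvdn_leq (ep a)); rewrite mE -{2}(mul1n (2 ^ a)%N) leq_pmul2r //.
  by rewrite leqNgt r2.
move=> H.
have nz : (2 ^ a)%:Z != 0 by rewrite -natz pnatr_eq0 -lt0n ep.
set rest := \prod_(_ <- _ | _) _ in H.
have H2 : fC m * rest = r%:Z.
  by apply: (mulIf nz); rewrite mulrC H {1}mE PoszM.
have : oddz r%:Z by rewrite oddz_nat -coprime2n.
by rewrite -H2 oddzM => /andP[].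
Qed.

Lemma cycl_prod1 s : (cycl_prod s).[1] = \prod_(m <- s) fC m.
Proof. by rewrite /cycl_prod horner_prod. Qed.

Lemma oddz_prod (s : seq nat) : oddz (\prod_(m <- s) fC m) = all (fun m => oddz (fC m)) s.
Proof. by elim: s => [|x s IH]; rewrite ?big_nil ?big_cons ?oddzM ?IH. Qed.

Lemma partA (s : seq nat) : (forall m, m \in s -> (0 < m)%N) ->
     (((cycl_prod s).[1] %% 2)%Z = 1 <-> (forall m, m \in s -> ~ is_pow2 m)).
Proof.
move=> s0; rewrite cycl_prod1; split.
  move/oddz_mod; rewrite oddz_prod => /allP h m ms; exact: ((fC_odd _ (s0 m ms)).1 (h m ms)).
by move=> h; apply/oddz_mod; rewrite oddz_prod; apply/allP=> m ms; apply: (fC_odd _ (s0 m ms)).2; exact: h.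
Qed.

Lemma eig_horner (R : comNzRingType) n' (A : 'M[R]_n'.+1) (w : 'rV_n'.+1) l p :
  w *m A = l *: w -> w *m horner_mx A p = p.[l] *: w.
Proof.
move=> wA; elim/poly_ind: p => [|q c IH].
  by rewrite rmorph0 mulmx0 horner0 scale0r.
rewrite rmorphD rmorphM /= horner_mx_X horner_mx_C mulmxDr -mulmxE mulmxA IH.
by rewrite mul_mx_scalar -scalemxAl wA scalerA !hornerE scalerDl.
Qed.

Lemma eigsum_ker n' (A : 'M[algC]_n'.+1) p w :
  in_eigsum A p w -> w *m horner_mx A p = 0.
Proof.
case=> s [hs ->]; rewrite mulmx_suml big1_seq // => lv /andP[_ /hs [r e]].
by rewrite (@eig_horner _ _ _ _ _ p e) (eqP r) scale0r.
Qed.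

Lemma horner_mx_comm (R : comNzRingType) n' (A : 'M[R]_n'.+1) p j :
  A ^+ j * horner_mx A p = horner_mx A p * A ^+ j.
Proof.
by rewrite -{1 4}(horner_mx_X A) -!rmorphXn -!rmorphM /= mulrC.
Qed.

Lemma ker_eigsum n' (A : 'M[algC]_n'.+1) p w k : (0 < k)%N -> A ^+ k = 1 ->
  w *m horner_mx A p = 0 -> in_eigsum A p w.
Proof.
move=> k0 Ak wp; have [z zp] := C_prim_root_exists k0.
have z0 : z != 0.
  apply/negP => /eqP z0; have := prim_expr_order zp.
  by rewrite z0 expr0n eqn0Ngt k0 /= => /eqP; rewrite eq_sym oner_eq0.
pose u (i : nat) := (k%:R^-1 : algC) *: \sum_(0 <= j < k) ((z ^+ i)^-1) ^+ j *: (w *m A ^+ j).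
have pk j : ((z ^+ j)^-1) ^+ k = 1.
  by rewrite exprVn -exprM mulnC exprM (prim_expr_order zp) expr1n invr1.
have eigu i : u i *m A = z ^+ i *: u i.
  set y := (z ^+ i)^-1.
  have ey : z ^+ i * y = 1 by rewrite mulfV // expf_neq0.
  pose a j := y ^+ j *: (w *m A ^+ j).
  have shift : \sum_(0 <= j < k) a j.+1 = \sum_(0 <= j < k) a j.
    have e1 : \sum_(0 <= i < k.+1) a i = \sum_(0 <= i < k) a i + a k by rewrite big_nat_recr.
    have e2 : \sum_(0 <= i < k.+1) a i = a 0%N + \sum_(0 <= i < k) a i.+1 by rewrite big_nat_recl.
    have ak : a k = a 0%N.
    by rewrite /a pk Ak expr0 expr0.
    by move: e2; rewrite e1 ak addrC => /addrI.
  rewrite /u -scalemxAl mulmx_suml.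
  rewrite (eq_bigr (fun j => z ^+ i *: a j.+1)); last first.
    move=> j _; rewrite /a -scalemxAl -mulmxA mulmxE -exprSr scalerA.
    by rewrite [y ^+ j.+1]exprS mulrA ey mul1r.
  by rewrite -scaler_sumr shift !scalerA mulrC.
have geo (g : algC) : g != 1 -> g ^+ k = 1 -> \sum_(0 <= i < k) g ^+ i = 0.
  move=> g1 gk; rewrite big_mkord; have := subrX1 g k; rewrite gk subrr => /esym/eqP.
  by rewrite mulf_eq0 subr_eq0 (negbTE g1) /= => /eqP.
have sumu : \sum_(0 <= i < k) u i = w.
  rewrite /u -scaler_sumr exchange_big /=.
  rewrite (eq_bigr (fun j => (\sum_(0 <= i < k) ((z ^+ j)^-1) ^+ i) *: (w *m A ^+ j))); last first.
    move=> j _; rewrite scaler_suml; apply: eq_bigr => i _.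
    by rewrite !exprVn -!exprM mulnC.
  case: k k0 Ak zp pk geo {u eigu} => // k' _ Ak zp pk geo.
  rewrite big_nat_recl // [X in _ + X]big1_seq; last first.
    move=> i /andP[_]; rewrite mem_index_iota => /andP[_ ik].
    rewrite geo ?scale0r //.
    rewrite invr_eq1 -(prim_order_dvd zp); apply/negP => /(dvdn_leq (ltn0Sn i)).
    by rewrite leqNgt ltnS ik.
  rewrite expr0 invr1.
  rewrite addr0 (eq_bigr (fun _ => 1)); last by move=> i _; rewrite expr1n.
  rewrite sumr_const_nat subn0 mulmx1 scalerA mulVf ?scale1r //.
  by rewrite pnatr_eq0.
have ker i : ~~ root p (z ^+ i) -> u i = 0.
  move=> nr; have h0 : u i *m horner_mx A p = 0.
    rewrite /u -scalemxAl mulmx_suml big1 ?scaler0 // => j _.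
    by rewrite -scalemxAl -mulmxA mulmxE horner_mx_comm -mulmxE mulmxA wp mul0mx scaler0.
  move: h0; rewrite (@eig_horner _ _ _ _ _ p (eigu i)) => /eqP.
  by rewrite scaler_eq0 -rootE (negbTE nr) /= => /eqP.
exists [seq (z ^+ i, u i) | i <- [seq i <- iota 0 k | root p (z ^+ i)]]; split.
  move=> lv /mapP[i]; rewrite mem_filter => /andP[r _] -> /=; split=> //; exact: eigu.
apply/esym; rewrite (big_map (fun i => (z ^+ i, u i)) xpredT (fun lv => lv.2)) big_filter -sumu (big_mkcond (fun i => root p (z ^+ i))) /=.
rewrite /index_iota subn0; apply: eq_bigr => i _.
by case: ifP => // /negbT /ker ->.
Qed.
Set Implicit Arguments. Unset Strict Implicit.

Lemma mulmx1r (R : pzRingType) m n' (x : 'M[R]_(m, n'.+1)) : x *m (1 : 'M_n'.+1) = x.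
Proof. exact: mulmx1. Qed.

Definition LH n' (M : 'M[int]_n'.+1) (L : 'rV[int]_n'.+1 -> Prop) (k : nat) v0 :=
  [/\ inv_sublattice M L, (0 < k)%N, M ^+ k = 1, ~ L v0 & forall x, L x \/ L (x - v0)].

Section Lat.
Lemma Lsub n' M (L : 'rV[int]_n'.+1 -> Prop) : inv_sublattice M L ->
  forall x y, L x -> L y -> L (x - y).
Proof. by case=> _ hD hN _ x y Lx Ly; apply: hD => //; apply: hN. Qed.

Lemma Lscale n' M (L : 'rV[int]_n'.+1 -> Prop) : inv_sublattice M L ->
  forall (c : int) x, L x -> L (c *: x).
Proof.
move=> hL; case: (hL) => h0 hD hN _ c x Lx.
have hn m : L (m%:Z *: x).
  rewrite -natz scaler_nat; elim: m => [|m IH]; first by rewrite mulr0n.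
  by rewrite mulrS; apply: hD.
by case: c => m; rewrite ?NegzE ?scaleNr; [apply: hn | apply/hN/hn].
Qed.

Lemma LMpow n' M (L : 'rV[int]_n'.+1 -> Prop) : inv_sublattice M L ->
  forall j x, L x -> L (x *m M ^+ j).
Proof.
case=> _ _ _ hM; elim=> [|j IH] x Lx; first by rewrite expr0 mulmx1r.
rewrite exprS; have -> : x *m (M * M ^+ j) = x *m M *m M ^+ j by rewrite -mulmxA.
by apply: IH; apply: hM.
Qed.

Lemma LM n' M L k v0 : @LH n' M L k v0 -> forall x, L (x *m M - x).
Proof.
case=> hL k0 Mk nv hx x; have hs := Lsub hL; case: (hL) => _ hD hN hM.
have back y : L (y *m M) -> L y.
  move=> h; have := LMpow hL k.-1 h.
  by rewrite -mulmxA mulmxE -exprS prednK // Mk mulmx1r.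
case: (hx x) => [Lx|Lxv]; first by apply: hs => //; apply: hM.
case: (hx (x *m M)) => [LxM|LxMv].
  by exfalso; apply: nv; have := hs _ _ (back _ LxM) Lxv; rewrite opprB addrC subrK.
by have := hs _ _ LxMv Lxv; rewrite opprB addrA subrK.
Qed.

Lemma Lpoly n' M L k v0 : @LH n' M L k v0 ->
  forall q x, L (x *m horner_mx M q - q.[1] *: x).
Proof.
move=> H; have [hL _ _ _ _] := H; have hs := Lsub hL; have hc := Lscale hL.
case: (hL) => h0 hD hN hM q x.
elim/poly_ind: q => [|q c IH].
  by rewrite rmorph0 mulmx0 horner0 scale0r subrr.
rewrite rmorphD rmorphM /= horner_mx_X horner_mx_C mulmxDr -mulmxE mulmxA.
rewrite mul_mx_scalar !hornerE scalerDl.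
have -> : x *m horner_mx M q *m M + c *: x - (q.[1] *: x + c *: x) =
   (x *m horner_mx M q - q.[1] *: x) *m M + q.[1] *: (x *m M - x).
  rewrite mulmxBl -scalemxAl scalerBr.
  by rewrite opprD [RHS]addrA subrK addrACA subrr addr0.
by apply: hD; [apply: hM | apply: hc; apply: (LM H)].
Qed.

Lemma Lodd n' M L k v0 : @LH n' M L k v0 ->
  forall (c : int) x, oddz c -> L (c *: x) -> L x.
Proof.
move=> H; case: (H) => hL _ _ nv hx; have hs := Lsub hL; have hc := Lscale hL.
case: (hL) => h0 hD hN hM c x oc Lcx.
have L2 y : L (y + y).
  have Lv : L (v0 + v0).
    by case: (hx (v0 + v0)) => // h; exfalso; apply: nv; rewrite addrK in h.
  case: (hx y) => [Ly|Lyv]; first exact: hD.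
  have := hD _ _ (hD _ _ Lyv Lyv) Lv.
  by rewrite addrACA !subrK.
have cE : c = (c %/ 2)%Z * 2 + 1 by rewrite {1}(divz_eq c 2) (oddz_mod c).2.
have : L (c *: x - x).
  by rewrite {1}cE scalerDl scale1r addrK -scalerA scaler_nat mulr2n; apply/hc/L2.
by move=> h; have := hs _ _ Lcx h; rewrite opprB addrC subrK.
Qed.

Lemma Lkey n' M L k v0 : @LH n' M L k v0 ->
  forall q x, oddz q.[1] -> L (x *m horner_mx M q) -> L x.
Proof.
move=> H q x oq Lx; apply: (Lodd H oq).
have [hL _ _ _ _] := H; have := Lsub hL Lx (Lpoly H q x); by rewrite opprB addrC subrK.
Qed.
End Lat.

Lemma map_mxX n' (M : 'M[int]_n'.+1) j :
  map_mx (intr : int -> algC) (M ^+ j) = (map_mx intr M) ^+ j.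
Proof.
elim: j => [|j IH]; first by rewrite !expr0; exact: map_mx1.
by rewrite !exprS -!mulmxE map_mxM IH.
Qed.

Lemma map_row0 m (y : 'M[int]_(1, m)) : map_mx (intr : int -> algC) y = 0 -> y = 0.
Proof.
move=> h; apply/rowP => i; have := congr1 (fun A : 'M[algC]_(1, m) => A 0 i) h; rewrite !mxE => /eqP.
by rewrite intr_eq0 => /eqP.
Qed.

Lemma eigiff n' (M : 'M[int]_n'.+1) k B p y : (0 < k)%N -> M ^+ k = 1 ->
  Bpart M B p y <-> (B y /\ y *m horner_mx M p = 0).
Proof.
move=> k0 Mk; have Mck : (map_mx (intr : int -> algC) M) ^+ k = 1.
  by rewrite -map_mxX Mk; exact: map_mx1.
rewrite /Bpart; split=> -[By h]; split=> //.
  apply: map_row0; rewrite map_mxM map_horner_mx; exact: eigsum_ker.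
apply: (@ker_eigsum _ _ _ _ k k0 Mck); rewrite -map_horner_mx -map_mxM h.
by apply/rowP => i; rewrite !mxE.
Qed.

Lemma cycl_monic s : cycl_prod s \is monic.
Proof. by apply: monic_prod => i _; apply: Cyclotomic_monic. Qed.

Lemma divE (d p : {poly int}) : d \is monic -> d %| p -> p = (p %/ d) * d.
Proof. by move=> md /Pdiv.Idomain.divpK; rewrite (monicP md) expr1n scale1r. Qed.

Unset Implicit Arguments.

Theorem lemma2p12 :
  (forall s : seq nat, (forall m, m \in s -> (0 < m)%N) ->
     (((cycl_prod s).[1] %% 2)%Z = 1 <-> (forall m, m \in s -> ~ is_pow2 m)))
  /\
  (forall (n : nat) (M : 'M[int]_n) (L1 : 'rV[int]_n -> Prop)
          (J1 J2 : seq nat),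
     M \in unitmx ->
     (exists k : nat, (0 < k)%N /\ M ^+ k = 1) ->
     inv_sublattice M L1 ->
     index2 (fun _ => True) L1 ->
     (forall m, m \in J1 -> (0 < m)%N /\ ~ is_pow2 m) ->
     (forall m, m \in J2 -> is_pow2 m) ->
     char_poly M = cycl_prod J1 * cycl_prod J2 ->
     [/\ J2 != [::], cycl_prod J2 != 1 &
       forall t : seq nat, (forall m, m \in t -> (0 < m)%N) ->
         cycl_prod t %| char_poly M ->
         (cycl_prod t %| cycl_prod J1 ->
            forall x, Bpart M (fun _ => True) (cycl_prod t) x <-> Bpart M L1 (cycl_prod t) x)
         /\
         (cycl_prod J2 %| cycl_prod t ->
            index2 (Bpart M (fun _ => True) (cycl_prod t)) (Bpart M L1 (cycl_prod t)))]).
Proof.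
split; first exact: partA.
move=> n M L1 J1 J2 Mu [k [k0 Mk]] hL [_ [v0 [_ nv hx]]] hJ1 hJ2 hchar.
case: n M L1 Mu Mk hL v0 nv hx hchar => [|n'] M L1 Mu Mk hL v0 nv hx hchar.
  exfalso; apply: nv; have -> : v0 = 0 by apply/rowP => -[].
  by case: hL.
have H : LH M L1 k v0 by split => // x; exact: hx x I.
have [h0 hD hN hM] := hL.
have oJ1 : oddz (cycl_prod J1).[1].
  have J1pos m : m \in J1 -> (0 < m)%N by move=> /hJ1 [].
  by apply/oddz_mod; apply: (partA J1 J1pos).2 => m /hJ1 [].
have CH := Cayley_Hamilton M.
have J2ne : J2 != [::].
  apply/eqP => J2E; apply: nv; apply: (Lkey H (q := char_poly M)).
    by rewrite hchar J2E /cycl_prod big_nil mulr1.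
  by rewrite CH mulmx0.
have pJ2 : cycl_prod J2 != 1.
  case: J2 J2ne hJ2 {hchar} => // m J2' _ hJ2; apply/eqP => h.
  have := congr1 (fun p => oddz p.[1]) h; rewrite cycl_prod1 big_cons oddzM hornerC /=.
  have [e me] := hJ2 m (mem_head _ _).
  have m0 : (0 < m)%N by rewrite me expn_gt0.
  case o: (oddz (fC m)) => //.
  by exfalso; apply: ((fC_odd _ m0).1 o); exists e.
split=> // t tpos tdiv; split.
  move=> tJ1 x; split; last by case=> _ h; split.
  move/(eigiff _ _ _ k0 Mk) => [_ hx0]; apply/(eigiff _ _ _ k0 Mk); split=> //.
  apply: (Lkey H (q := cycl_prod t)); last by rewrite hx0.
  have := oJ1; rewrite (divE (cycl_monic t) tJ1) hornerM oddzM.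
  by case/andP.
move=> J2t.
have cE := divE (cycl_monic t) tdiv.
have tE := divE (cycl_monic J2) J2t.
set qq := char_poly M %/ cycl_prod t in cE.
set s := cycl_prod t %/ cycl_prod J2 in tE.
have J1E : cycl_prod J1 = qq * s.
  apply: (mulIf (monic_neq0 (cycl_monic J2))).
  by rewrite -hchar cE {1}tE mulrA.
have oqq : oddz qq.[1] by move: oJ1; rewrite J1E hornerM oddzM => /andP[].
pose v := v0 *m horner_mx M qq.
have vker : v *m horner_mx M (cycl_prod t) = 0.
  by rewrite /v -mulmxA mulmxE -rmorphM /= -cE CH mulmx0.
have nLv : ~ L1 v by move=> Lv; apply: nv; exact: (Lkey H (q := qq)).
have Lvv : L1 (v - v0) by case: (hx v I).
split; first by move=> x [h1 h2]; split.
exists v; split.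
- by apply/(eigiff _ _ _ k0 Mk).
- by case.
move=> x /(eigiff _ _ _ k0 Mk) [_ xk].
have xvk : (x - v) *m horner_mx M (cycl_prod t) = 0 by rewrite mulmxBl xk vker subrr.
case: (hx x I) => [Lx|Lxv].
  by left; apply/(eigiff _ _ _ k0 Mk).
right; apply/(eigiff _ _ _ k0 Mk); split=> //.
by have := Lsub hL Lxv Lvv; rewrite opprB addrA subrK.
Qed.
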